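(* Let $\Delta\subseteq\Sigma$ for a finite alphabet $\Sigma$, and let $L\subseteq\Sigma^\omega$ be an aperiodic language such that each string in $L$ contains exactly one occurrence of a symbol from $\Delta$. Then $L$ can be written as a finite union of disjoint languages $R_\ell\, a\, R_r$ where $a\in\Delta$, $R_\ell\subseteq(\Sigma\setminus\Delta)^*$ and $R_r\subseteq(\Sigma\setminus\Delta)^\omega$. Moreover $R_\ell$ and $R_r$ are aperiodic.
   Context: A finite monoid $M$ is aperiodic if there is $n$ with $x^n=x^{n+1}$ for all $x\in M$. A language $K\subseteq\Sigma^*$ is aperiodic if it is recognized by a morphism $h:\Sigma^*\to M$ to a finite aperiodic monoid (i.e. $K=h^{-1}(h(K))$). For $\omega$-languages: given a morphism $h:\Sigma^*\to M$ to a finite monoid, $\omega$-strings $u,v$ are $h$-similar if they factor as $u=u_1u_2\cdots$, $v=v_1v_2\cdots$ with $u_i,v_i\in\Sigma^+$ and $h(u_i)=h(v_i)$; let $\cong$ be its transitive closure; $h$ recognizes $L\subseteq\Sigma^\omega$ if $w\in L$ and $u\cong w$ imply $u\in L$; $L$ is aperiodic if recognized by a morphism to a finite aperiodic monoid. *)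

(* Defs.v *)
From mathcomp Require Import all_boot.
Set Implicit Arguments. Unset Strict Implicit. Unset Printing Implicit Defensive.

Record finMonoid := FinMonoid {
  mcarrier :> finType;
  mmul : mcarrier -> mcarrier -> mcarrier;
  mone : mcarrier;
  mmulA : forall x y z, mmul x (mmul y z) = mmul (mmul x y) z;
  mmul1 : forall x, mmul mone x = x;
  mmul1r : forall x, mmul x mone = x }.

Definition mpow (M : finMonoid) (x : M) (n : nat) : M := iter n (mmul x) (mone M).

Definition aperiodic_monoid (M : finMonoid) : Prop :=
  exists n : nat, forall x : M, mpow x n = mpow x n.+1.

Definition is_morphism (Sigma : finType) (M : finMonoid) (h : seq Sigma -> M) : Prop :=
  h [::] = mone M /\ forall u v, h (u ++ v) = mmul (h u) (h v).

(* Finite-word languages K ⊆ Sigma^*; K = h^{-1}(h(K)). *)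
Definition recognizes (Sigma : finType) (M : finMonoid) (h : seq Sigma -> M)
  (K : seq Sigma -> Prop) : Prop :=
  forall u v, h u = h v -> K u -> K v.

Definition aperiodic_lang (Sigma : finType) (K : seq Sigma -> Prop) : Prop :=
  exists (M : finMonoid) (h : seq Sigma -> M),
    aperiodic_monoid M /\ is_morphism h /\ recognizes h K.

Definition oword (Sigma : Type) := nat -> Sigma.

(* A factorization w = w_0 w_1 ... into nonempty finite words is given by
   strictly increasing cut points c with c 0 = 0; w_i = w[c i, c (i+1)). *)
Definition cut_points (c : nat -> nat) : Prop :=
  c 0 = 0 /\ forall i, c i < c i.+1.

Definition segment (Sigma : Type) (w : oword Sigma) (c : nat -> nat) (i : nat)
  : seq Sigma := mkseq (fun j => w (c i + j)) (c i.+1 - c i).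

Definition hsimilar (Sigma : finType) (M : finMonoid) (h : seq Sigma -> M)
  (u v : oword Sigma) : Prop :=
  exists cu cv, cut_points cu /\ cut_points cv /\
    forall i, h (segment u cu i) = h (segment v cv i).

Inductive hcong (Sigma : finType) (M : finMonoid) (h : seq Sigma -> M)
  : oword Sigma -> oword Sigma -> Prop :=
| hcong_step u v : hsimilar h u v -> hcong h u v
| hcong_trans u v w : hcong h u v -> hcong h v w -> hcong h u w.

Definition orecognizes (Sigma : finType) (M : finMonoid) (h : seq Sigma -> M)
  (L : oword Sigma -> Prop) : Prop :=
  forall w u, L w -> hcong h u w -> L u.

Definition aperiodic_olang (Sigma : finType) (L : oword Sigma -> Prop) : Prop :=
  exists (M : finMonoid) (h : seq Sigma -> M),
    aperiodic_monoid M /\ is_morphism h /\ orecognizes h L.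

Definition ocat (Sigma : Type) (u : seq Sigma) (x : oword Sigma) : oword Sigma :=
  fun k => if k < size u then nth (x 0) u k else x (k - size u).

Definition in_concat (Sigma : finType) (Rl : seq Sigma -> Prop) (a : Sigma)
  (Rr : oword Sigma -> Prop) (w : oword Sigma) : Prop :=
  exists u x, Rl u /\ Rr x /\ w =1 ocat (rcons u a) x.

(* Main.v *)
Require Import Defs.
From mathcomp Require Import all_boot.
From mathcomp Require Import zify.

Section Helpers.
Variable Sigma : finType.

Lemma ocat_shift (p : seq Sigma) x k : ocat p x (size p + k) = x k.
Proof. by rewrite /ocat ltnNge leq_addr /= addKn. Qed.

Lemma mkseq_ocat (p : seq Sigma) x n :
  mkseq (ocat p x) (size p + n) = p ++ mkseq x n.
Proof.
rewrite /mkseq iotaD map_cat add0n; congr (_ ++ _).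
  rewrite -[RHS](mkseq_nth (x 0)) /mkseq; apply/eq_in_map => j.
  by rewrite mem_iota add0n /ocat => /= ->.
by rewrite -[size p]addn0 iotaDl -map_comp; apply: eq_map => j /=; rewrite ocat_shift.
Qed.

Lemma ocat_lt (u : seq Sigma) a x j d : j < size u -> ocat (rcons u a) x j = nth d u j.
Proof.
move=> lt; rewrite /ocat size_rcons ltnS (ltnW lt) nth_rcons lt.
exact: set_nth_default.
Qed.

Lemma ocat_at (u : seq Sigma) a x : ocat (rcons u a) x (size u) = a.
Proof. by rewrite /ocat size_rcons ltnSn nth_rcons ltnn eqxx. Qed.

Variable M : finMonoid.
Variable h : seq Sigma -> M.
Hypothesis hm : is_morphism h.

Lemma hsim_ocat p q x y : h p = h q -> hsimilar h x y ->
  hsimilar h (ocat p x) (ocat q y).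
Proof.
move=> hpq [cx [cy [[cx0 cxi] [[cy0 cyi] E]]]].
exists (fun i => if i is 0 then 0 else size p + cx i),
       (fun i => if i is 0 then 0 else size q + cy i).
split; [split|split; [split|]] => //.
- case=> [|i] /=; last by rewrite ltn_add2l.
  by have := cxi 0; rewrite cx0; lia.
- case=> [|i] /=; last by rewrite ltn_add2l.
  by have := cyi 0; rewrite cy0; lia.
- case=> [|i].
    have -> : segment (ocat p x) (fun i => if i is 0 then 0 else size p + cx i) 0
              = p ++ segment x cx 0.
      rewrite /segment /= subn0 cx0 subn0 -mkseq_ocat.
      by apply: eq_mkseq => j.
    have -> : segment (ocat q y) (fun i => if i is 0 then 0 else size q + cy i) 0
              = q ++ segment y cy 0.
      rewrite /segment /= subn0 cy0 subn0 -mkseq_ocat.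
      by apply: eq_mkseq => j.
    by rewrite !hm.2 hpq E.
  have -> : segment (ocat p x) (fun i => if i is 0 then 0 else size p + cx i) i.+1
            = segment x cx i.+1.
    by rewrite /segment /= subnDl; apply: eq_mkseq => j; rewrite -addnA ocat_shift.
  have -> : segment (ocat q y) (fun i => if i is 0 then 0 else size q + cy i) i.+1
            = segment y cy i.+1.
    by rewrite /segment /= subnDl; apply: eq_mkseq => j; rewrite -addnA ocat_shift.
  exact: E.
Qed.

Lemma hsim_refl (x y : oword Sigma) : x =1 y -> hsimilar h x y.
Proof.
move=> E; exists id, id; split; [by []|split; [by []|]] => i.
by congr (h _); apply: eq_mkseq => j; rewrite E.
Qed.

Lemma hcong_ocat p x y : hcong h x y -> hcong h (ocat p x) (ocat p y).
Proof.
elim=> [u v H|u v w _ IH1 _ IH2]; first exact/hcong_step/hsim_ocat.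
exact: hcong_trans IH1 IH2.
Qed.

End Helpers.

Theorem mainTheorem8 (Sigma : finType) (Delta : {set Sigma})
  (L : oword Sigma -> Prop) :
  aperiodic_olang L ->
  (forall w, L w -> exists! k, w k \in Delta) ->
  exists (n : nat) (a : 'I_n -> Sigma) (Rl : 'I_n -> seq Sigma -> Prop)
         (Rr : 'I_n -> oword Sigma -> Prop),
    (forall i, a i \in Delta) /\
    (forall i u, Rl i u -> all (fun s => s \notin Delta) u) /\
    (forall i x, Rr i x -> forall k, x k \notin Delta) /\
    (forall w, L w <-> exists i, in_concat (Rl i) (a i) (Rr i) w) /\
    (forall i j w, i <> j -> in_concat (Rl i) (a i) (Rr i) w ->
                   ~ in_concat (Rl j) (a j) (Rr j) w) /\
    (forall i, aperiodic_lang (Rl i)) /\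
    (forall i, aperiodic_olang (Rr i)).
Proof.
move=> [M [h [ap [hm rec]]]] uniq.
have Lext : forall w w', L w -> w =1 w' -> L w'.
  move=> w w' Lw E; apply: (rec w) => //; apply: hcong_step; apply: hsim_refl.
  by move=> k; rewrite E.
have Lswap : forall u v a x, h u = h v -> L (ocat (rcons u a) x) ->
    L (ocat (rcons v a) x).
  move=> u v a x huv Lu; apply: (rec _ _ Lu); apply: hcong_step.
  apply: hsim_ocat => //; last exact: hsim_refl.
  by rewrite -!cats1 !hm.2 huv.
have pos : forall u a x, a \in Delta -> L (ocat (rcons u a) x) ->
    all (fun s => s \notin Delta) u /\ forall k, x k \notin Delta.
  move=> u a x aD Lw; have [k [_ Hk]] := uniq _ Lw.
  have ku : k = size u by apply: Hk; rewrite ocat_at.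
  split.
    apply/(all_nthP a) => j lt; apply/negP => Hj.
    have := Hk j; rewrite (@ocat_lt _ u a x j a lt) => /(_ Hj); lia.
  move=> j; apply/negP => Hj.
  have := Hk (size (rcons u a) + j); rewrite ocat_shift => /(_ Hj).
  rewrite size_rcons; lia.
pose T := {x : Sigma * M | x.1 \in Delta}.
exists #|{: T}|.
pose ev (i : 'I_#|{: T}|) : T := enum_val i.
exists (fun i => (val (ev i)).1).
exists (fun i u => h u = (val (ev i)).2 /\ exists x, L (ocat (rcons u (val (ev i)).1) x)).
exists (fun i x => exists u, h u = (val (ev i)).2 /\ L (ocat (rcons u (val (ev i)).1) x)).
split; first by move=> i; exact: (valP (ev i)).
split; first by move=> i u [_ [x Lx]]; have [] := pos _ _ _ (valP (ev i)) Lx.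
split; first by move=> i x [u [_ Lx]]; have [] := pos _ _ _ (valP (ev i)) Lx.
have Lin : forall i w, in_concat
    (fun u => h u = (val (ev i)).2 /\ exists x, L (ocat (rcons u (val (ev i)).1) x))
    (val (ev i)).1
    (fun x => exists u, h u = (val (ev i)).2 /\ L (ocat (rcons u (val (ev i)).1) x)) w
    -> L w.
  move=> i w [u [x [[hu _] [[v [hv Lv]] E]]]].
  apply: (Lext _ _ _ (fun k => esym (E k))).
  by apply: (Lswap v _ _ _ _ Lv); rewrite hu hv.
split.
  move=> w; split; last by move=> [i]; apply: Lin.
  move=> Lw; have [k [Dk Hk]] := uniq w Lw.
  pose u := mkseq w k; pose x := fun j => w (k.+1 + j).
  pose t : T := exist _ (w k, h u) Dk.
  have evt : ev (enum_rank t) = t by rewrite /ev enum_rankK.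
  have E : w =1 ocat (rcons u (w k)) x.
    move=> j; rewrite /ocat size_rcons size_mkseq nth_rcons size_mkseq.
    case: (ltngtP j k) => [lt|gt|->].
    - by rewrite ltnS (ltnW lt) nth_mkseq.
    - rewrite ltnNge gt /= /x; congr (w _); lia.
    - by rewrite ?ltnSn ?ltnn ?eqxx.
  exists (enum_rank t); exists u, x; rewrite evt /=.
  split; first by split => //; exists x; exact: Lext E.
  by split => //; exists u; split => //; exact: Lext E.
split.
  move=> i j w neq Hi Hj; apply: neq.
  have Lw := Lin _ _ Hi.
  move: Hi Hj => [u [x [[hu _] [_ E]]]] [v [y [[hv _] [_ E']]]].
  have [k [_ Hk]] := uniq w Lw.
  have wu : w (size u) = (val (ev i)).1 by rewrite E ocat_at.
  have wv : w (size v) = (val (ev j)).1 by rewrite E' ocat_at.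
  have su : k = size u by apply: Hk; rewrite wu (valP (ev i)).
  have sv : k = size v by apply: Hk; rewrite wv (valP (ev j)).
  have uv : u = v.
    apply: (eq_from_nth (x0 := (val (ev i)).1)); first by rewrite -su -sv.
    move=> l lt.
    have lt' : l < size v by rewrite -sv su.
    rewrite -(@ocat_lt _ u (val (ev i)).1 x l _ lt) -(@ocat_lt _ v (val (ev j)).1 y l _ lt').
    by rewrite -E -E'.
  apply: enum_val_inj; apply: val_inj.
  change (val (ev i) = val (ev j)).
  rewrite (surjective_pairing (val (ev i))) (surjective_pairing (val (ev j))).
  by rewrite -hu -hv -wu -wv uv.
split.
  move=> i; exists M, h; split => //; split => // u v huv [hu [x Lx]].
  split; first by rewrite -huv.
  by exists x; apply: Lswap Lx.
move=> i; exists M, h; split => //; split => // x x' [u [hu Lu]] hc.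
exists u; split => //; apply: (rec _ _ Lu); exact: hcong_ocat.
Qed.
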